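(* Let $A$ and $B$ be groups each admitting a regular left-order. Then $(A*B)\times\mathbb{Z}$ admits a regular left-order.
   Context: A left-order on a group $G$ is a total order invariant under left multiplication, with positive cone $P=\{g:1\prec g\}$. It is regular if $G$ is finitely generated and there exist a finite set $X$, a surjective monoid homomorphism $\pi\colon X^*\to G$ and a regular language $\mathcal{L}\subseteq X^*$ (accepted by a finite state automaton) with $\pi(\mathcal{L})=P$. $A*B$ denotes the free product. *)

(* Defs.v *)
From mathcomp Require Import all_boot.
From Stdlib Require Import ZArith.
Set Warnings "-notation-overridden".

Set Implicit Arguments.
Unset Strict Implicit.
Unset Printing Implicit Defensive.

Record Group := {
  gcar :> Type;
  gmul : gcar -> gcar -> gcar;
  gone : gcar;
  ginv : gcar -> gcar;
  gmulA : forall x y z, gmul x (gmul y z) = gmul (gmul x y) z;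
  gmul1g : forall x, gmul gone x = x;
  gmulVg : forall x, gmul (ginv x) x = gone
}.

Arguments gmul {g}.
Arguments gone {g}.
Arguments ginv {g}.

Definition is_hom (G H : Group) (f : G -> H) : Prop :=
  forall x y : G, f (gmul x y) = gmul (f x) (f y).

(** [G] together with [iA], [iB] is a free product [A * B]
    (characterized by its universal property, which determines it up to
    isomorphism). *)
Definition is_free_product (A B G : Group) (iA : A -> G) (iB : B -> G) : Prop :=
  is_hom iA /\ is_hom iB /\
  forall (H : Group) (f : A -> H) (g : B -> H), is_hom f -> is_hom g ->
    (exists h : G -> H, is_hom h /\ (forall a, h (iA a) = f a) /\
                        (forall b, h (iB b) = g b)) /\
    (forall h1 h2 : G -> H,
        is_hom h1 -> (forall a, h1 (iA a) = f a) -> (forall b, h1 (iB b) = g b) ->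
        is_hom h2 -> (forall a, h2 (iA a) = f a) -> (forall b, h2 (iB b) = g b) ->
        forall x, h1 x = h2 x).

Section ProdZ.
Variable G : Group.
Definition pz_mul (x y : G * Z) : G * Z := (gmul x.1 y.1, (x.2 + y.2)%Z).
Definition pz_one : G * Z := (gone, 0%Z).
Definition pz_inv (x : G * Z) : G * Z := (ginv x.1, (- x.2)%Z).
Lemma pz_mulA x y z : pz_mul x (pz_mul y z) = pz_mul (pz_mul x y) z.
Proof. by rewrite /pz_mul /= gmulA Z.add_assoc. Qed.
Lemma pz_mul1 x : pz_mul pz_one x = x.
Proof. by case: x => a n; rewrite /pz_mul /= gmul1g. Qed.
Lemma pz_mulV x : pz_mul (pz_inv x) x = pz_one.
Proof. by rewrite /pz_mul /= gmulVg Z.add_opp_diag_l. Qed.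
Definition prodZ : Group :=
  {| gcar := G * Z; gmul := pz_mul; gone := pz_one; ginv := pz_inv;
     gmulA := pz_mulA; gmul1g := pz_mul1; gmulVg := pz_mulV |}.
End ProdZ.

Definition left_order (G : Group) (lt : G -> G -> Prop) : Prop :=
  (forall x, ~ lt x x) /\
  (forall x y z, lt x y -> lt y z -> lt x z) /\
  (forall x y, x <> y -> lt x y \/ lt y x) /\
  (forall g x y, lt x y -> lt (gmul g x) (gmul g y)).

Definition positive_cone (G : Group) (lt : G -> G -> Prop) (g : G) : Prop :=
  lt gone g.

Record DFA (X : finType) := {
  dstate : finType;
  dstart : dstate;
  daccept : pred dstate;
  dtrans : dstate -> X -> dstate
}.

Definition dfa_accepts (X : finType) (D : DFA X) (w : seq X) : bool :=
  @daccept X D (foldl (@dtrans X D) (@dstart X D) w).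

Definition word_eval (G : Group) (X : Type) (s : X -> G) (w : seq X) : G :=
  foldr (fun x acc => gmul (s x) acc) gone w.

Definition regular_order (G : Group) (lt : G -> G -> Prop) : Prop :=
  exists (X : finType) (s : X -> G),
    (forall g : G, exists w : seq X, word_eval s w = g) /\
    exists D : DFA X,
      forall g : G, positive_cone lt g <->
        exists w : seq X, dfa_accepts D w /\ word_eval s w = g.

Definition admits_regular_left_order (G : Group) : Prop :=
  exists lt : G -> G -> Prop, left_order lt /\ regular_order lt.

(* Main.v *)
Set Warnings "-notation-overridden".
From mathcomp Require Import all_boot.
From Stdlib Require Import ZArith Lia ClassicalEpsilon ProofIrrelevance FunctionalExtensionality.
Require Import Defs.
Set Implicit Arguments.
Unset Strict Implicit.
Unset Printing Implicit Defensive.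

Section GroupLemmas.
Variable H : Group.
Implicit Types x y z : H.

Lemma gmulgV x : gmul x (ginv x) = gone.
Proof.
rewrite -[gmul x (ginv x)]gmul1g -{1}(gmulVg (ginv x)) -gmulA (gmulA (ginv x) x) gmulVg gmul1g gmulVg //.
Qed.

Lemma gmulg1 x : gmul x gone = x.
Proof. by rewrite -(gmulVg x) gmulA gmulgV gmul1g. Qed.

Lemma gmulKg x y : gmul (ginv x) (gmul x y) = y.
Proof. by rewrite gmulA gmulVg gmul1g. Qed.

Lemma gmulKVg x y : gmul x (gmul (ginv x) y) = y.
Proof. by rewrite gmulA gmulgV gmul1g. Qed.

Lemma gmul_cancel x y z : gmul x y = gmul x z -> y = z.
Proof. by move=> e; rewrite -(gmulKg x y) e gmulKg. Qed.

Lemma ginv_uniq x y : gmul x y = gone -> x = ginv y.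
Proof. by move=> e; rewrite -(gmulg1 x) -(gmulgV y) gmulA e gmul1g. Qed.

Lemma ginv_uniqr x y : gmul x y = gone -> y = ginv x.
Proof. by move=> e; apply: (@gmul_cancel x); rewrite e gmulgV. Qed.

Lemma ginvK x : ginv (ginv x) = x.
Proof. by symmetry; apply: ginv_uniq; rewrite gmulgV. Qed.

Lemma ginvM x y : ginv (gmul x y) = gmul (ginv y) (ginv x).
Proof.
symmetry; apply: ginv_uniq.
by rewrite -gmulA (gmulA (ginv x)) gmulVg gmul1g gmulVg.
Qed.

Lemma ginv1 : ginv (@gone H) = gone.
Proof. by symmetry; apply: ginv_uniq; rewrite gmulg1. Qed.

End GroupLemmas.

Lemma hom1 (H K : Group) (f : H -> K) : is_hom f -> f gone = gone.
Proof.
move=> hf; apply: (@gmul_cancel _ (f gone)).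
by rewrite -hf gmul1g gmulg1.
Qed.

Lemma homV (H K : Group) (f : H -> K) x : is_hom f -> f (ginv x) = ginv (f x).
Proof.
move=> hf; apply: ginv_uniq; by rewrite -hf gmulVg hom1.
Qed.

Definition isneg (H : Group) (lt : H -> H -> Prop) (x : H) : bool :=
  if excluded_middle_informative (lt x gone) then true else false.

Section LO.
Variables (H : Group) (lt : H -> H -> Prop).
Hypothesis lo : left_order lt.

Lemma lo_irr x : ~ lt x x. Proof. by case: lo. Qed.
Lemma lo_trans x y z : lt x y -> lt y z -> lt x z.
Proof. by case: lo => _ [t _]; apply: t. Qed.
Lemma lo_tot x y : x <> y -> lt x y \/ lt y x.
Proof. by case: lo => _ [_ [t _]]; apply: t. Qed.
Lemma lo_mul g x y : lt x y -> lt (gmul g x) (gmul g y).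
Proof. by case: lo => _ [_ [_ t]]; apply: t. Qed.
Lemma lo_asym x y : lt x y -> ~ lt y x.
Proof. by move=> a b; apply: (@lo_irr x); apply: lo_trans a b. Qed.

Lemma isnegP x : reflect (lt x gone) (isneg lt x).
Proof. by rewrite /isneg; case: excluded_middle_informative => h; constructor. Qed.

Lemma isneg1 : isneg lt gone = false.
Proof. by apply/isnegP; apply: lo_irr. Qed.

Lemma isneg_ne1 x : isneg lt x -> x <> gone.
Proof. by move=> /isnegP h e; rewrite e in h; apply: (lo_irr h). Qed.

Lemma pos_of_nonneg x : x <> gone -> ~~ isneg lt x -> lt gone x.
Proof. by move=> ne /isnegP nn; case: (lo_tot ne) => // h. Qed.

Lemma pos_notneg x : lt gone x -> isneg lt x = false.
Proof. by move=> h; apply/isnegP => h'; apply: (lo_asym h h'). Qed.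

Lemma isnegV x : x <> gone -> isneg lt (ginv x) = ~~ isneg lt x.
Proof.
move=> ne; case: (isnegP x) => h /=.
- apply: pos_notneg.
  by have := lo_mul (ginv x) h; rewrite gmulVg gmulg1.
- have p := pos_of_nonneg ne (introN (isnegP x) h).
  apply/isnegP; by have := lo_mul (ginv x) p; rewrite gmulVg gmulg1.
Qed.

Lemma isneg_merge a x : isneg lt (gmul a x) -> isneg lt a || isneg lt x.
Proof.
case: (isnegP a) => //= ha; case: (isnegP x) => //= hx hax.
case: (excluded_middle_informative (a = gone)) => [ea|nea].
  by move: hax; rewrite ea gmul1g => /isnegP.
have pa : lt gone a by apply: pos_of_nonneg => //; apply/isnegP.
case: (excluded_middle_informative (x = gone)) => [ex|nex].
  by move: hax; rewrite ex gmulg1 => /isnegP.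
have px : lt gone x by apply: pos_of_nonneg => //; apply/isnegP.
have := lo_mul a px; rewrite gmulg1 => h.
move/isnegP: hax => hax.
by case: (lo_irr (lo_trans (lo_trans pa h) hax)).
Qed.

End LO.

Section Words.
Variables A B : Group.

Definition Syl := (gcar A + gcar B)%type.

Definition nt (c : Syl) : Prop :=
  match c with inl a => a <> gone | inr b => b <> gone end.
Definition isB (c : Syl) : bool := if c is inr _ then true else false.
Definition Ahead (w : seq Syl) : bool := if w is inl _ :: _ then true else false.
Definition Bhead (w : seq Syl) : bool := if w is inr _ :: _ then true else false.

Fixpoint red (w : seq Syl) : Prop :=
  match w with
  | [::] => True
  | c :: w' => nt c /\ (if w' is c' :: _ then isB c != isB c' else True) /\ red w'
  end.

Definition CA (y : A) (w : seq Syl) : seq Syl :=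
  if excluded_middle_informative (y = gone) then w else inl y :: w.
Definition CB (y : B) (w : seq Syl) : seq Syl :=
  if excluded_middle_informative (y = gone) then w else inr y :: w.

Definition actA (a : A) (w : seq Syl) : seq Syl :=
  match w with inl x :: w' => CA (gmul a x) w' | _ => CA a w end.
Definition actB (b : B) (w : seq Syl) : seq Syl :=
  match w with inr x :: w' => CB (gmul b x) w' | _ => CB b w end.

Lemma CA1 w : CA gone w = w.
Proof. by rewrite /CA; case: excluded_middle_informative. Qed.
Lemma CAn y w : y <> gone -> CA y w = inl y :: w.
Proof. by rewrite /CA; case: excluded_middle_informative. Qed.
Lemma CB1 w : CB gone w = w.
Proof. by rewrite /CB; case: excluded_middle_informative. Qed.
Lemma CBn y w : y <> gone -> CB y w = inr y :: w.
Proof. by rewrite /CB; case: excluded_middle_informative. Qed.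

Lemma actA_CA a y w : ~~ Ahead w -> actA a (CA y w) = CA (gmul a y) w.
Proof.
move=> nA; case: (excluded_middle_informative (y = gone)) => [->|ne].
  by rewrite CA1 gmulg1; case: w nA => [|[x|x] w] //.
by rewrite CAn.
Qed.

Lemma actB_CB b y w : ~~ Bhead w -> actB b (CB y w) = CB (gmul b y) w.
Proof.
move=> nB; case: (excluded_middle_informative (y = gone)) => [->|ne].
  by rewrite CB1 gmulg1; case: w nB => [|[x|x] w] //.
by rewrite CBn.
Qed.

Lemma decompA w : red w -> exists x w', w = CA x w' /\ ~~ Ahead w' /\ red w'.
Proof.
case: w => [|[x|x] w] /=.
- by move=> _; exists gone, [::]; rewrite CA1.
- move=> [nx [h r]]; exists x, w; rewrite CAn //; split=> //; split=> //.
  by case: w h r => [|[y|y] w].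
- move=> h; exists gone, (inr x :: w); by rewrite CA1.
Qed.

Lemma decompB w : red w -> exists x w', w = CB x w' /\ ~~ Bhead w' /\ red w'.
Proof.
case: w => [|[x|x] w] /=.
- by move=> _; exists gone, [::]; rewrite CB1.
- move=> h; exists gone, (inl x :: w); by rewrite CB1.
- move=> [nx [h r]]; exists x, w; rewrite CBn //; split=> //; split=> //.
  by case: w h r => [|[y|y] w].
Qed.

Lemma red_CA y w : ~~ Ahead w -> red w -> red (CA y w).
Proof.
rewrite /CA; case: excluded_middle_informative => // ne nA r /=.
by split=> //; split=> //; case: w nA r => [|[x|x] w].
Qed.

Lemma red_CB y w : ~~ Bhead w -> red w -> red (CB y w).
Proof.
rewrite /CB; case: excluded_middle_informative => // ne nB r /=.
by split=> //; split=> //; case: w nB r => [|[x|x] w].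
Qed.

Lemma red_actA a w : red w -> red (actA a w).
Proof.
move=> /decompA [x [w' [-> [nA r]]]]; rewrite actA_CA //; exact: red_CA.
Qed.
Lemma red_actB b w : red w -> red (actB b w).
Proof.
move=> /decompB [x [w' [-> [nB r]]]]; rewrite actB_CB //; exact: red_CB.
Qed.

Lemma actA_mul a a' w : red w -> actA (gmul a a') w = actA a (actA a' w).
Proof.
move=> /decompA [x [w' [-> [nA r]]]]; by rewrite !actA_CA // gmulA.
Qed.
Lemma actB_mul b b' w : red w -> actB (gmul b b') w = actB b (actB b' w).
Proof.
move=> /decompB [x [w' [-> [nB r]]]]; by rewrite !actB_CB // gmulA.
Qed.

Lemma actA1 w : red w -> actA gone w = w.
Proof. move=> /decompA [x [w' [-> [nA r]]]]; by rewrite actA_CA // gmul1g. Qed.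
Lemma actB1 w : red w -> actB gone w = w.
Proof. move=> /decompB [x [w' [-> [nB r]]]]; by rewrite actB_CB // gmul1g. Qed.

End Words.

Section Sym.
Variable T : Type.
Definition Perm := {p : (T -> T) * (T -> T) |
  (forall x, p.1 (p.2 x) = x) /\ (forall x, p.2 (p.1 x) = x)}.

Lemma perm_ext (p q : Perm) :
  (forall x, (sval p).1 x = (sval q).1 x) ->
  (forall x, (sval p).2 x = (sval q).2 x) -> p = q.
Proof.
case: p => [[f g] hp]; case: q => [[f' g'] hq] /= e1 e2.
have ef : f = f' by apply: functional_extensionality.
have eg : g = g' by apply: functional_extensionality.
subst f' g'; by rewrite (proof_irrelevance _ hp hq).
Qed.

Definition pmul (p q : Perm) : Perm.
Proof.
exists ((fun x => (sval p).1 ((sval q).1 x)), (fun x => (sval q).2 ((sval p).2 x))).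
case: p => [[f g] [hp1 hp2]]; case: q => [[f' g'] [hq1 hq2]] /=; simpl in *.
split=> x /=; [by rewrite hq1 hp1 | by rewrite hp2 hq2].
Defined.

Definition pone : Perm.
Proof. by exists (id, id). Defined.

Definition pinv (p : Perm) : Perm.
Proof.
exists ((sval p).2, (sval p).1).
by case: p => [[f g] [h1 h2]] /=.
Defined.

Lemma pmulA x y z : pmul x (pmul y z) = pmul (pmul x y) z.
Proof. by apply: perm_ext. Qed.
Lemma pmul1 x : pmul pone x = x.
Proof. by apply: perm_ext. Qed.
Lemma pmulV x : pmul (pinv x) x = pone.
Proof. by apply: perm_ext => y /=; case: x => [[f g] [h1 h2]] /=. Qed.

Definition SymG : Group :=
  {| gcar := Perm; gmul := pmul; gone := pone; ginv := pinv;
     gmulA := pmulA; gmul1g := pmul1; gmulVg := pmulV |}.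
End Sym.

(* subgroup induction from the universal property *)
Section SubInd.
Variables (A B G : Group) (iA : A -> G) (iB : B -> G).
Hypothesis FP : is_free_product iA iB.
Variable Q : G -> Prop.
Hypothesis Q1 : Q gone.
Hypothesis QM : forall x y, Q x -> Q y -> Q (gmul x y).
Hypothesis QV : forall x, Q x -> Q (ginv x).
Hypothesis QA : forall a, Q (iA a).
Hypothesis QB : forall b, Q (iB b).

Definition Sub := {g : G | Q g}.
Definition smul (x y : Sub) : Sub := exist _ (gmul (sval x) (sval y)) (QM (svalP x) (svalP y)).
Definition sone : Sub := exist _ gone Q1.
Definition sinv (x : Sub) : Sub := exist _ (ginv (sval x)) (QV (svalP x)).
Lemma sub_ext (x y : Sub) : sval x = sval y -> x = y.
Proof.
case: x => x hx; case: y => y hy /= e; subst y; by rewrite (proof_irrelevance _ hx hy).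
Qed.
Lemma smulA x y z : smul x (smul y z) = smul (smul x y) z.
Proof. apply: sub_ext; exact: gmulA. Qed.
Lemma smul1 x : smul sone x = x.
Proof. apply: sub_ext; exact: gmul1g. Qed.
Lemma smulV x : smul (sinv x) x = sone.
Proof. apply: sub_ext; exact: gmulVg. Qed.
Definition SubG : Group :=
  {| gcar := Sub; gmul := smul; gone := sone; ginv := sinv;
     gmulA := smulA; gmul1g := smul1; gmulVg := smulV |}.

Lemma sub_ind g : Q g.
Proof.
have hA : is_hom (fun a : A => (exist _ (iA a) (QA a) : SubG)).
  move=> x y; apply: sub_ext => /=; by case: FP => h _; apply: h.
have hB : is_hom (fun b : B => (exist _ (iB b) (QB b) : SubG)).
  move=> x y; apply: sub_ext => /=; by case: FP => _ [h _]; apply: h.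
case: FP => hiA [hiB U].
case: (U SubG _ _ hA hB) => [[h [hh [ha hb]]] _].
case: (U G iA iB hiA hiB) => [_ uniq].
have e : forall x, sval (h x) = x.
  apply: (uniq (fun x => sval (h x)) id).
  - by move=> x y /=; rewrite hh.
  - by move=> a; rewrite ha.
  - by move=> b; rewrite hb.
  - by [].
  - by [].
  - by [].
rewrite -(e g); exact: svalP.
Qed.
End SubInd.

Section Main.
Variables (A B G : Group) (iA : A -> G) (iB : B -> G).
Hypothesis FP : is_free_product iA iB.

Lemma iA_hom : is_hom iA. Proof. by case: FP. Qed.
Lemma iB_hom : is_hom iB. Proof. by case: FP => _ []. Qed.

Definition Om := {w : seq (Syl A B) | red w}.
Lemma om_ext (x y : Om) : sval x = sval y -> x = y.
Proof.
case: x => x hx; case: y => y hy /= e; subst y; by rewrite (proof_irrelevance _ hx hy).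
Qed.

Definition OA (a : A) (x : Om) : Om := exist _ (actA a (sval x)) (red_actA a (svalP x)).
Definition OB (b : B) (x : Om) : Om := exist _ (actB b (sval x)) (red_actB b (svalP x)).

Definition rA (a : A) : SymG Om.
Proof.
exists (OA a, OA (ginv a)); split=> x /=; apply: om_ext => /=.
- by rewrite -actA_mul ?gmulgV ?actA1 //; apply: svalP.
- by rewrite -actA_mul ?gmulVg ?actA1 //; apply: svalP.
Defined.
Definition rB (b : B) : SymG Om.
Proof.
exists (OB b, OB (ginv b)); split=> x /=; apply: om_ext => /=.
- by rewrite -actB_mul ?gmulgV ?actB1 //; apply: svalP.
- by rewrite -actB_mul ?gmulVg ?actB1 //; apply: svalP.
Defined.

Lemma rA_hom : is_hom rA.
Proof.
move=> x y; apply: perm_ext => w /=; apply: om_ext => /=.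
- by rewrite actA_mul //; apply: svalP.
- by rewrite ginvM actA_mul //; apply: svalP.
Qed.
Lemma rB_hom : is_hom rB.
Proof.
move=> x y; apply: perm_ext => w /=; apply: om_ext => /=.
- by rewrite actB_mul //; apply: svalP.
- by rewrite ginvM actB_mul //; apply: svalP.
Qed.

Definition iota (c : Syl A B) : G := match c with inl a => iA a | inr b => iB b end.
Definition ev (w : seq (Syl A B)) : G := foldr (fun c acc => gmul (iota c) acc) gone w.

Lemma ev_CA y w : ev (CA y w) = gmul (iA y) (ev w).
Proof.
case: (excluded_middle_informative (y = gone)) => [->|ne].
  by rewrite CA1 (hom1 iA_hom) gmul1g.
by rewrite CAn.
Qed.
Lemma ev_CB y w : ev (CB y w) = gmul (iB y) (ev w).
Proof.
case: (excluded_middle_informative (y = gone)) => [->|ne].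
  by rewrite CB1 (hom1 iB_hom) gmul1g.
by rewrite CBn.
Qed.

Lemma ev_actA a w : red w -> ev (actA a w) = gmul (iA a) (ev w).
Proof.
move=> /decompA [x [w' [-> [nA r]]]]; by rewrite actA_CA // !ev_CA iA_hom gmulA.
Qed.
Lemma ev_actB b w : red w -> ev (actB b w) = gmul (iB b) (ev w).
Proof.
move=> /decompB [x [w' [-> [nB r]]]]; by rewrite actB_CB // !ev_CB iB_hom gmulA.
Qed.

Section Rho.
Variable rho : G -> SymG Om.
Hypothesis rho_hom : is_hom rho.
Hypothesis rhoA : forall a, rho (iA a) = rA a.
Hypothesis rhoB : forall b, rho (iB b) = rB b.

Definition app (g : G) (x : Om) : Om := (sval (rho g)).1 x.

Lemma app_mul g h x : app (gmul g h) x = app g (app h x).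
Proof. by rewrite /app rho_hom. Qed.

Lemma rho_ev g (x : Om) : ev (sval (app g x)) = gmul g (ev (sval x)).
Proof.
move: x; pattern g; apply: (sub_ind FP).
- move=> x; by rewrite /app (hom1 rho_hom) gmul1g.
- move=> u v hu hv x; by rewrite app_mul hu hv gmulA.
- move=> u hu x.
  have e : app u ((sval (rho u)).2 x) = x by rewrite /app; case: (svalP (rho u)) => h1 _; apply: h1.
  have := hu ((sval (rho u)).2 x); rewrite e => ->.
  by rewrite /app (homV _ rho_hom) /= gmulKg.
- move=> a x; rewrite /app rhoA /=; apply: ev_actA; exact: svalP.
- move=> b x; rewrite /app rhoB /=; apply: ev_actB; exact: svalP.
Qed.

Definition eps : Om := exist _ [::] I.
Definition nf (g : G) : seq (Syl A B) := sval (app g eps).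

Lemma red_nf g : red (nf g). Proof. exact: svalP. Qed.
Lemma ev_nf g : ev (nf g) = g.
Proof. by rewrite /nf rho_ev /= gmulg1. Qed.

Definition actS (c : Syl A B) (w : seq (Syl A B)) :=
  match c with inl a => actA a w | inr b => actB b w end.
Definition mulw (u w : seq (Syl A B)) := foldr actS w u.

Lemma app_ev u x : red u -> sval (app (ev u) x) = mulw u (sval x).
Proof.
elim: u => [|c u IH] /=.
  by move=> _; rewrite /app (hom1 rho_hom).
move=> [_ [_ r]]; rewrite app_mul -IH //.
by case: c => [a|b] /=; rewrite /app ?rhoA ?rhoB.
Qed.

Lemma nf_mul g h : nf (gmul g h) = mulw (nf g) (nf h).
Proof.
rewrite /nf app_mul -{1}(ev_nf g) app_ev //; exact: red_nf.
Qed.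

Lemma mulw_nil u : red u -> mulw u [::] = u.
Proof.
elim: u => [|c u IH] //= [nc [hc r]]; rewrite IH //.
case: c nc hc => [a|b] /= nc hc.
- by case: u hc {IH r} => [|[x|x] u] //= _; rewrite CAn.
- by case: u hc {IH r} => [|[x|x] u] //= _; rewrite CBn.
Qed.

Lemma nf_ev w : red w -> nf (ev w) = w.
Proof. by move=> r; rewrite /nf app_ev // mulw_nil. Qed.

Lemma nf1 : nf gone = [::].
Proof. by have := nf_ev (w := [::]) I. Qed.

Lemma nf_eq1 g : nf g = [::] -> g = gone.
Proof. by move=> e; rewrite -(ev_nf g) e. Qed.

End Rho.
End Main.

Section Phi.
Variables (A B : Group) (ltA : A -> A -> Prop) (ltB : B -> B -> Prop).
Hypothesis LA : left_order ltA.
Hypothesis LB : left_order ltB.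

Local Notation Syl := (Syl A B).

Definition nu (c : Syl) : Z :=
  match c with inl a => Z.b2z (isneg ltA a) | inr b => Z.b2z (isneg ltB b) end.
Definition neZ (w : seq Syl) : Z := if w is [::] then 0%Z else 1%Z.

Fixpoint phi (w : seq Syl) : Z :=
  match w with
  | [::] => 0%Z
  | c :: w' => (- nu c + (if isB c then neZ w' else 0) + phi w')%Z
  end.

Fixpoint lastB (w : seq Syl) : bool :=
  match w with
  | [::] => false
  | [:: c] => isB c
  | _ :: w' => lastB w'
  end.

Lemma lastB_rcons u c : lastB (rcons u c) = isB c.
Proof. by elim: u => [|x u IH] //=; rewrite IH; case: u {IH}. Qed.

Lemma phi_rcons u c : phi (rcons u c) = (phi u - nu c + Z.b2z (lastB u))%Z.
Proof.
elim: u => [|x u IH] /=; first by case: (isB c) => /=; lia.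
rewrite IH; case: u IH => [|y u] /= IH; case: (isB x) => /=; lia.
Qed.

Lemma red_rcons u c :
  red (rcons u c) <-> red u /\ nt c /\ (if u is [::] then True else lastB u != isB c).
Proof.
elim: u => [|x u IH]; first by split => /= [[h _]|[_ [h _]]].
case: u IH => [|y u] IH.
- by split => /= [[nx [h [nc _]]] | [[nx _] [nc h]]]; do ! split => //.
- have E : red (x :: rcons (y :: u) c) <->
    (nt x /\ isB x != isB y /\ red (rcons (y :: u) c)) by [].
  rewrite E IH; split.
  + by move=> [nx [h [ru [nc hl]]]]; do ! split => //.
  + by move=> [[nx [h ru]] [nc hl]]; do ! split => //.
Qed.

Lemma nu_nonneg c : (0 <= nu c <= 1)%Z.
Proof. by case: c => [a|b] /=; [case: (isneg ltA a)|case: (isneg ltB b)] => /=; lia. Qed.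

Lemma negA_merge (a x : A) : (Z.b2z (isneg ltA (gmul a x)) <= Z.b2z (isneg ltA a) + Z.b2z (isneg ltA x))%Z.
Proof.
case h: (isneg ltA (gmul a x)) => /=; last by case: (isneg ltA a); case: (isneg ltA x) => /=; lia.
by move: (isneg_merge LA h); case: (isneg ltA a); case: (isneg ltA x) => //=; lia.
Qed.
Lemma negB_merge (a x : B) : (Z.b2z (isneg ltB (gmul a x)) <= Z.b2z (isneg ltB a) + Z.b2z (isneg ltB x))%Z.
Proof.
case h: (isneg ltB (gmul a x)) => /=; last by case: (isneg ltB a); case: (isneg ltB x) => /=; lia.
by move: (isneg_merge LB h); case: (isneg ltB a); case: (isneg ltB x) => //=; lia.
Qed.

Lemma negA_inv (a x : A) : a <> gone -> gmul a x = gone ->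
  (Z.b2z (isneg ltA a) + Z.b2z (isneg ltA x) = 1)%Z.
Proof.
move=> ne e; rewrite (ginv_uniqr e) (isnegV LA ne); by case: (isneg ltA a).
Qed.
Lemma negB_inv (a x : B) : a <> gone -> gmul a x = gone ->
  (Z.b2z (isneg ltB a) + Z.b2z (isneg ltB x) = 1)%Z.
Proof.
move=> ne e; rewrite (ginv_uniqr e) (isnegV LB ne); by case: (isneg ltB a).
Qed.

Lemma phi_CA (y : A) (w : seq Syl) : phi (CA y w) = (- Z.b2z (isneg ltA y) + phi w)%Z.
Proof.
case: (excluded_middle_informative (y = gone)) => [->|ne].
  by rewrite CA1 (isneg1 LA) /=; lia.
rewrite CAn //=; lia.
Qed.

Lemma mulw_rcons (g : seq Syl) (s : Syl) (h : seq Syl) : mulw (rcons g s) h = mulw g (actS s h).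
Proof. by rewrite /mulw foldr_rcons. Qed.

Lemma red_actS (s : Syl) (h : seq Syl) : red h -> red (actS s h).
Proof. by case: s => [a|b] /=; [apply: red_actA|apply: red_actB]. Qed.

Lemma super (g h : seq Syl) : red g -> red h ->
  (phi (mulw g h) >= phi g + phi h + Z.b2z (lastB g && Ahead h))%Z.
Proof.
elim/last_ind: g h => [|g s IH] h.
  by move=> _ _ /=; lia.
move=> /red_rcons [rg [ns side]] rh.
rewrite mulw_rcons phi_rcons lastB_rcons.
case: s ns side => [a|b] /= ns side.
- have [x [h' [eh [nA rh']]]] := decompA rh.
  rewrite eh actA_CA //.
  have IH' := IH (CA (gmul a x) h') rg (red_CA _ nA rh').
  move: IH'; rewrite !phi_CA /=.
  case: (excluded_middle_informative (gmul a x = gone)) => [e|ne].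
  + rewrite e CA1 (isneg1 LA).
    have := negA_inv ns e.
    have hh : Ahead h' = false by apply/negbTE.
    rewrite hh; case: (lastB g) => /=; lia.
  + rewrite (CAn _ ne) /=.
    have := @negA_merge a x.
    case: (lastB g) => /=; lia.
- have [y [h' [eh [nB rh']]]] := decompB rh.
  rewrite eh actB_CB //.
  have lg : lastB g = false.
    by case: g side {IH rg} => [|z g] //; case: (lastB (z :: g)).
  have IH' := IH (CB (gmul b y) h') rg (red_CB _ nB rh').
  rewrite lg /= in IH' *.
  have nh : Ahead h' = (if h' is [::] then false else true).
    by case: h' nB {eh rh rh' IH IH'} => [|[u|u] h'].
  case: (excluded_middle_informative (y = gone)) => [ey|ney].
  + move: IH'; rewrite ey gmulg1 CB1 (CBn _ ns) /= nh.
    by case: h' nh {eh rh rh' nB IH} => [|z h'] _ /=; lia.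
  + rewrite (CBn _ ney) /=.
    case: (excluded_middle_informative (gmul b y = gone)) => [e|ne].
    * move: IH'; rewrite e CB1.
      have := negB_inv ns e.
      by case: h' nh {eh rh rh' nB IH} => [|z h'] _ /=; lia.
    * move: IH'; rewrite (CBn _ ne) /=.
      have := @negB_merge b y.
      by case: h' nh {eh rh rh' nB IH} => [|z h'] _ /=; lia.
Qed.

Definition sinvS (c : Syl) : Syl :=
  match c with inl a => inl (ginv a) | inr b => inr (ginv b) end.
Definition revinv (w : seq Syl) : seq Syl := rev (map sinvS w).

Lemma revinv_cons c w : revinv (c :: w) = rcons (revinv w) (sinvS c).
Proof. by rewrite /revinv /= rev_cons. Qed.

Lemma rcons_match (v : seq Syl) (x : Syl) (P : Prop) (Q : Prop) :
  (if rcons v x is [::] then P else Q) = Q.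
Proof. by case: v. Qed.

Lemma isB_sinv c : isB (sinvS c) = isB c. Proof. by case: c. Qed.

Lemma nt_sinv c : nt c -> nt (sinvS c).
Proof.
case: c => [a|b] /= ne e; apply: ne.
- by rewrite -(ginvK a) e ginv1.
- by rewrite -(ginvK b) e ginv1.
Qed.

Lemma nu_sinv c : nt c -> nu (sinvS c) = (1 - nu c)%Z.
Proof.
case: c => [a|b] /= ne; [rewrite (isnegV LA ne); case: (isneg ltA a)
  | rewrite (isnegV LB ne); case: (isneg ltB b)] => /=; lia.
Qed.

Lemma red_revinv w : red w -> red (revinv w).
Proof.
elim: w => [|c w IH] //= [nc [hc rw]].
rewrite revinv_cons; apply/red_rcons; split; first exact: IH.
split; first exact: nt_sinv.
case: w hc {IH rw} => [|c' w] //= hc.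
by rewrite revinv_cons rcons_match lastB_rcons !isB_sinv eq_sym.
Qed.

Lemma phi_revinv w : red w -> w <> [::] -> phi (revinv w) = (- phi w - 1)%Z.
Proof.
elim: w => [|c w IH] //= [nc [hc rw]] _.
rewrite revinv_cons phi_rcons nu_sinv //.
case: w hc IH rw => [|c' w] hc IH rw.
  have e0 : phi (revinv [::]) = 0%Z by []. have e1 : lastB (revinv [::]) = false by []. have e3 : phi [::] = 0%Z by []. have e4 : neZ [::] = 0%Z by []. rewrite e0 e1 ?e3 ?e4. have e5 : Z.b2z false = 0%Z by []. by rewrite e5; case: (isB c); lia.
rewrite IH // revinv_cons lastB_rcons isB_sinv.
have e6 : neZ (c' :: w) = 1%Z by []. rewrite e6. have e5 : Z.b2z false = 0%Z by []. have e7 : Z.b2z true = 1%Z by []. by move: hc; case: (isB c); case: (isB c') => // _; rewrite ?e5 ?e7; lia.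
Qed.

End Phi.

Section Ord.
Variables (A B G : Group) (iA : A -> G) (iB : B -> G).
Hypothesis FP : is_free_product iA iB.
Variables (ltA : A -> A -> Prop) (ltB : B -> B -> Prop).
Hypothesis LA : left_order ltA.
Hypothesis LB : left_order ltB.
Variable rho : G -> SymG (Om A B).
Hypothesis rho_hom : is_hom rho.
Hypothesis rhoA : forall a, rho (iA a) = rA B a.
Hypothesis rhoB : forall b, rho (iB b) = rB A b.

Local Notation NF := (nf rho).
Local Notation EV := (ev iA iB).
Local Notation PHI := (phi ltA ltB).

Lemma evnf g : EV (NF g) = g. Proof. apply: (ev_nf FP rho_hom rhoA rhoB). Qed.
Lemma nfev w : red w -> NF (EV w) = w. Proof. move=> r; exact: (nf_ev rho_hom rhoA rhoB r). Qed.
Lemma rednf g : red (NF g). Proof. exact: red_nf. Qed.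

Lemma ev_rcons u c : EV (rcons u c) = gmul (EV u) (iota iA iB c).
Proof.
elim: u => [|x u IH] /=; first by rewrite gmulg1 gmul1g.
by rewrite IH gmulA.
Qed.

Lemma iota_sinv c : iota iA iB (sinvS c) = ginv (iota iA iB c).
Proof. case: c => [a|b] /=; [exact: homV (iA_hom FP) | exact: homV (iB_hom FP)]. Qed.

Lemma ev_revinv w : EV (revinv w) = ginv (EV w).
Proof.
elim: w => [|c w IH]; first by rewrite /= ginv1.
by rewrite revinv_cons ev_rcons IH iota_sinv /= ginvM.
Qed.

Lemma nf_inv g : NF (ginv g) = revinv (NF g).
Proof.
by rewrite -{1}(evnf g) -ev_revinv nfev //; apply: red_revinv; apply: rednf.
Qed.

Lemma phi_mul g h : (PHI (NF (gmul g h)) >= PHI (NF g) + PHI (NF h))%Z.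
Proof.
rewrite (nf_mul FP rho_hom rhoA rhoB).
have := super LA LB (rednf g) (rednf h).
case: (_ && _) => /=; lia.
Qed.

Lemma phi_inv g : g <> gone -> PHI (NF (ginv g)) = (- PHI (NF g) - 1)%Z.
Proof.
move=> ne; rewrite nf_inv phi_revinv //; first exact: rednf.
by move=> e; apply: ne; rewrite -(evnf g) e.
Qed.

Lemma nf_one : NF gone = [::].
Proof. by have := @nfev [::] I. Qed.

Definition fz (x : prodZ G) : Z := (x.2 + PHI (NF x.1))%Z.
Definition Pc (x : prodZ G) : Prop := x <> gone /\ (0 <= fz x)%Z.

Lemma pzE (x y : prodZ G) : gmul x y = (gmul x.1 y.1, (x.2 + y.2)%Z).
Proof. by []. Qed.
Lemma pzV (x : prodZ G) : ginv x = (ginv x.1, (- x.2)%Z).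
Proof. by []. Qed.
Lemma pz1 : (gone : prodZ G) = (gone, 0%Z).
Proof. by []. Qed.

Lemma fz_inv (x : prodZ G) : x.1 <> gone -> (fz (ginv x) = - fz x - 1)%Z.
Proof. move=> ne; rewrite /fz pzV /= phi_inv //; lia. Qed.

Lemma Pc_mul x y : Pc x -> Pc y -> Pc (gmul x y).
Proof.
case: x => g m; case: y => h n; rewrite /Pc /fz /= => [[nx px] [ny py]].
have hm := @phi_mul g h.
split; last by lia.
move=> e; have := f_equal fst e; have := f_equal snd e; rewrite /= => e2 e1.
case: (excluded_middle_informative (g = gone)) => [eg|neg].
- subst g; move: e1; rewrite gmul1g => eh; subst h.
  move: px py; rewrite nf_one /= => px py.
  have : m <> 0%Z by move=> em; apply: nx; rewrite em.
  lia.
- have eh : h = ginv g by apply: ginv_uniqr.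
  subst h; move: py; rewrite phi_inv //; lia.
Qed.

Lemma Pc1 : ~ Pc gone.
Proof. by case. Qed.

Lemma Pc_tot x : x <> gone -> Pc x \/ Pc (ginv x).
Proof.
case: x => g m ne.
case: (excluded_middle_informative (g = gone)) => [eg|neg].
- subst g; rewrite /Pc /fz /= ginv1 nf_one /=.
  have : m <> 0%Z by move=> em; apply: ne; rewrite em.
  move=> nm; case: (Z_le_gt_dec 0 m) => hm.
  + left; split => //; lia.
  + right; split; [move=> e; have := f_equal snd e; rewrite /=; lia | lia].
- have := @fz_inv (g, m) neg.
  rewrite /Pc => hf.
  case: (Z_le_gt_dec 0 (fz (g, m))) => hm.
  + by left.
  + right; split; [move=> e; apply: neg; have := f_equal fst e; rewrite /= => e1;
      by rewrite -(ginvK g) e1 ginv1 | lia].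
Qed.

Definition ltG (x y : prodZ G) : Prop := Pc (gmul (ginv x) y).

Lemma ltG_lo : left_order ltG.
Proof.
split; [|split; [|split]].
- by move=> x; rewrite /ltG gmulVg; apply: Pc1.
- move=> x y z hxy hyz; rewrite /ltG.
  have := Pc_mul hxy hyz; by rewrite -gmulA (gmulA y) gmulgV gmul1g.
- move=> x y ne.
  have ne' : gmul (ginv x) y <> gone.
    by move=> e; apply: ne; rewrite -(gmulKVg x y) e gmulg1.
  case: (Pc_tot ne') => h; [left | right] => //.
  by move: h; rewrite /ltG ginvM ginvK.
- move=> g x y; by rewrite /ltG ginvM -gmulA gmulKg.
Qed.

Lemma pos_ltG x : positive_cone ltG x <-> Pc x.
Proof. by rewrite /positive_cone /ltG ginv1 gmul1g. Qed.

End Ord.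

Lemma word_eval_cat (H : Group) (X : Type) (s : X -> H) u v :
  word_eval s (u ++ v) = gmul (word_eval s u) (word_eval s v).
Proof.
elim: u => [|x u IH] /=; first by rewrite gmul1g.
by rewrite IH gmulA.
Qed.

Lemma word_eval_rcons (H : Group) (X : Type) (s : X -> H) u x :
  word_eval s (rcons u x) = gmul (word_eval s u) (s x).
Proof. by rewrite -cats1 word_eval_cat /= gmulg1. Qed.

Section Reg.
Variables (A B G : Group) (iA : A -> G) (iB : B -> G).
Hypothesis FP : is_free_product iA iB.
Variables (ltA : A -> A -> Prop) (ltB : B -> B -> Prop).
Hypothesis LA : left_order ltA.
Hypothesis LB : left_order ltB.
Variable rho : G -> SymG (Om A B).
Hypothesis rho_hom : is_hom rho.
Hypothesis rhoA : forall a, rho (iA a) = rA B a.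
Hypothesis rhoB : forall b, rho (iB b) = rB A b.
Variables (XA : finType) (sA : XA -> A) (DA : DFA XA).
Hypothesis surjA : forall a, exists w, word_eval sA w = a.
Hypothesis DAspec : forall a, positive_cone ltA a <-> exists w, dfa_accepts DA w /\ word_eval sA w = a.
Variables (XB : finType) (sB : XB -> B) (DB : DFA XB).
Hypothesis surjB : forall b, exists w, word_eval sB w = b.
Hypothesis DBspec : forall b, positive_cone ltB b <-> exists w, dfa_accepts DB w /\ word_eval sB w = b.

Local Notation NF := (nf rho).
Local Notation EV := (ev iA iB).
Local Notation PHI := (phi ltA ltB).
Local Notation PC := (Pc ltA ltB rho).

Definition X : finType := ((bool * bool) + (XA + XB))%type.
Definition ek (k : bool * bool) : Z := (Z.b2z (~~ k.1) + Z.b2z (~~ k.2) - 1)%Z.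
Definition sX (x : X) : prodZ G :=
  match x with
  | inl k => (gone, ek k)
  | inr (inl a) => (iA (sA a), 0%Z)
  | inr (inr b) => (iB (sB b), 0%Z)
  end.

Definition St : finType := option (option (bool * bool * bool * dstate DB * dstate DA)).
Definition okst (k1 k2 : bool) (qB : dstate DB) (qA : dstate DA) : bool :=
  (k1 ==> daccept qB) && (k2 ==> daccept qA).
Definition trans (st : St) (x : X) : St :=
  match st, x with
  | None, _ => None
  | Some None, inl (k1, k2) => Some (Some (k1, k2, false, dstart DB, dstart DA))
  | Some None, inr _ => None
  | Some (Some (k1, k2, ph, qB, qA)), inl (k1', k2') =>
      if okst k1 k2 qB qA then Some (Some (k1', k2', false, dstart DB, dstart DA)) else None
  | Some (Some (k1, k2, ph, qB, qA)), inr (inl xa) =>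
      Some (Some (k1, k2, true, qB, dtrans qA xa))
  | Some (Some (k1, k2, ph, qB, qA)), inr (inr xb) =>
      if ph then None else Some (Some (k1, k2, false, dtrans qB xb, qA))
  end.
Definition acc (st : St) : bool :=
  match st with Some (Some (k1, k2, _, qB, qA)) => okst k1 k2 qB qA | _ => false end.
Definition Dfa : DFA X := @Build_DFA X St (Some None) acc trans.

Definition blk := ((bool * bool) * seq XB * seq XA)%type.
Definition inB (y : XB) : X := inr (inr y).
Definition inA (y : XA) : X := inr (inl y).
Definition bword (bl : blk) : seq X := inl bl.1.1 :: (map inB bl.1.2 ++ map inA bl.2).
Definition bvalid (bl : blk) : bool :=
  (bl.1.1.1 ==> dfa_accepts DB bl.1.2) && (bl.1.1.2 ==> dfa_accepts DA bl.2).
Definition bval (bl : blk) : prodZ G :=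
  (gmul (iB (word_eval sB bl.1.2)) (iA (word_eval sA bl.2)), ek bl.1.1).
Definition bvals (bs : seq blk) : prodZ G := foldr (fun bl acc => gmul (bval bl) acc) gone bs.

Lemma we_mapB u : word_eval sX (map inB u) = (iB (word_eval sB u), 0%Z).
Proof.
elim: u => [|y u IH] /=; first by rewrite (hom1 (iB_hom FP)).
by rewrite IH /= /pz_mul /= (iB_hom FP).
Qed.
Lemma we_mapA u : word_eval sX (map inA u) = (iA (word_eval sA u), 0%Z).
Proof.
elim: u => [|y u IH] /=; first by rewrite (hom1 (iA_hom FP)).
by rewrite IH /= /pz_mul /= (iA_hom FP).
Qed.

Lemma we_bword bl : word_eval sX (bword bl) = bval bl.
Proof.
case: bl => [[k u] v].
rewrite /bword /= word_eval_cat we_mapB we_mapA /bval /= /pz_mul /= gmul1g.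
by congr pair; lia.
Qed.

Lemma we_flatten bs : word_eval sX (flatten (map bword bs)) = bvals bs.
Proof.
elim: bs => [|bl bs IH] //.
have -> : flatten (map bword (bl :: bs)) = bword bl ++ flatten (map bword bs) by [].
by rewrite word_eval_cat we_bword IH.
Qed.

Lemma bvals_cat bs1 bs2 : bvals (bs1 ++ bs2) = gmul (bvals bs1) (bvals bs2).
Proof.
elim: bs1 => [|bl bs IH]; first by symmetry; apply: gmul1g.
change (gmul (bval bl) (bvals (bs ++ bs2)) = gmul (gmul (bval bl) (bvals bs)) (bvals bs2)).
by rewrite IH gmulA.
Qed.

Lemma runB k1 k2 qB qA u :
  foldl trans (Some (Some (k1, k2, false, qB, qA))) (map inB u) =
  Some (Some (k1, k2, false, foldl (@dtrans _ DB) qB u, qA)).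
Proof. by elim: u qB => [|y u IH] qB //=; rewrite IH. Qed.

Lemma runA k1 k2 ph qB qA v :
  foldl trans (Some (Some (k1, k2, ph, qB, qA))) (map inA v) =
  Some (Some (k1, k2, (if v is [::] then ph else true), qB, foldl (@dtrans _ DA) qA v)).
Proof.
elim: v ph qA => [|y v IH] ph qA //=; rewrite IH; by case: v {IH}.
Qed.

Definition good (st : St) : bool :=
  match st with
  | None => false
  | Some None => true
  | Some (Some (k1, k2, _, qB, qA)) => okst k1 k2 qB qA
  end.

Lemma run_bword st bl : good st ->
  exists ph, foldl trans st (bword bl) =
    Some (Some (bl.1.1.1, bl.1.1.2, ph, foldl (@dtrans _ DB) (dstart DB) bl.1.2,
                foldl (@dtrans _ DA) (dstart DA) bl.2)).
Proof.
case: bl => [[[k1 k2] u] v] /= g.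
have e1 : trans st (inl (k1, k2)) = Some (Some (k1, k2, false, dstart DB, dstart DA)).
  by case: st g => [[[[[[a b] c] d] e]|]|] //= ->.
rewrite /bword /= e1 foldl_cat runB runA.
by eexists.
Qed.

Lemma accept_blocks bs st : good st -> bs <> [::] -> all bvalid bs ->
  acc (foldl trans st (flatten (map bword bs))).
Proof.
elim: bs st => [|bl bs IH] st // g _ /andP [vb va].
have -> : flatten (map bword (bl :: bs)) = bword bl ++ flatten (map bword bs) by [].
rewrite foldl_cat.
have [ph e] := run_bword bl g.
rewrite e.
case: bs IH va => [|bl' bs] IH va.
  by rewrite /=.
apply: IH => //.
Qed.

Lemma nfw w : red w -> NF (EV w) = w.
Proof. move=> r; exact: (nf_ev rho_hom rhoA rhoB r). Qed.

Lemma Pc_of (x : prodZ G) : (x.1 <> gone \/ x.2 <> 0%Z) -> (0 <= fz ltA ltB rho x)%Z -> PC x.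
Proof.
case: x => g m /= h p; split => // e.
have e1 := f_equal fst e; have e2 := f_equal snd e; simpl in e1, e2.
by case: h.
Qed.

Lemma ne1_of_nf g c w : NF g = c :: w -> g <> gone.
Proof. move=> e eg; move: e; by rewrite eg (nf_one rho_hom rhoA rhoB). Qed.

Lemma posA_of a : dfa_accepts DA a -> ltA gone (word_eval sA a).
Proof. move=> h; apply/DAspec; by exists a. Qed.
Lemma posB_of b : dfa_accepts DB b -> ltB gone (word_eval sB b).
Proof. move=> h; apply/DBspec; by exists b. Qed.

Lemma bval_Pc bl : bvalid bl -> PC (bval bl).
Proof.
case: bl => [[[k1 k2] u] v]; rewrite /bvalid /bval /= => /andP [h1 h2].
set b := word_eval sB u; set a := word_eval sA v.
have hb : k1 -> ltB gone b by move=> k; apply: posB_of; move: h1; rewrite k.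
have ha : k2 -> ltA gone a by move=> k; apply: posA_of; move: h2; rewrite k.
have nb : k1 -> b <> gone by move=> k eb; have := hb k; rewrite eb => /(lo_irr LB).
have na : k2 -> a <> gone by move=> k ea; have := ha k; rewrite ea => /(lo_irr LA).
have sb : k1 -> isneg ltB b = false by move=> k; apply: (pos_notneg LB); apply: hb.
have sa : k2 -> isneg ltA a = false by move=> k; apply: (pos_notneg LA); apply: ha.
case: (excluded_middle_informative (b = gone)) => [eb|neb];
case: (excluded_middle_informative (a = gone)) => [ea|nea].
- rewrite eb ea (hom1 (iA_hom FP)) (hom1 (iB_hom FP)) gmul1g.
  case: k1 nb {h1 hb sb}; first by move=> /(_ isT).
  case: k2 na {h2 ha sa}; first by move=> /(_ isT).
  move=> _ _; apply: Pc_of; first by right.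
  by rewrite /fz /= (nf_one rho_hom rhoA rhoB).
- rewrite eb (hom1 (iB_hom FP)) gmul1g.
  have en : NF (iA a) = [:: inl a].
    have := @nfw [:: inl a] (conj nea (conj I I)); by rewrite /= gmulg1.
  case: k1 nb {h1 hb sb}; first by move=> /(_ isT).
  move=> _; apply: Pc_of; first by left; apply: ne1_of_nf en.
  rewrite /fz /= en /= /ek /=.
  by case: k2 sa {h2 ha na} => [->|_] //=; case: (isneg ltA a) => /=; lia.
- rewrite ea (hom1 (iA_hom FP)) gmulg1.
  have en : NF (iB b) = [:: inr b].
    have := @nfw [:: inr b] (conj neb (conj I I)); by rewrite /= gmulg1.
  case: k2 na {h2 ha sa}; first by move=> /(_ isT).
  move=> _; apply: Pc_of; first by left; apply: ne1_of_nf en.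
  rewrite /fz /= en /= /ek /=.
  by case: k1 sb {h1 hb nb} => [->|_] //=; case: (isneg ltB b) => /=; lia.
- have en : NF (gmul (iB b) (iA a)) = [:: inr b; inl a].
    have := @nfw [:: inr b; inl a] (conj neb (conj isT (conj nea (conj I I)))).
    by rewrite /= gmulg1.
  apply: Pc_of; first by left; apply: ne1_of_nf en.
  rewrite /fz /= en /= /ek /=.
  case: k1 sb {h1 hb nb} => [->|_] //=; case: k2 sa {h2 ha na} => [->|_] //=;
  case: (isneg ltA a); case: (isneg ltB b) => /=; lia.
Qed.

Lemma bvals_Pc bs : bs <> [::] -> all bvalid bs -> PC (bvals bs).
Proof.
elim: bs => [|bl bs IH] // _ /andP [vb va].
case: bs IH va => [|bl' bs] IH va.
  change (PC (gmul (bval bl) gone)); rewrite gmulg1; exact: bval_Pc.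
change (PC (gmul (bval bl) (bvals (bl' :: bs)))).
apply: (Pc_mul FP LA LB rho_hom rhoA rhoB); first exact: bval_Pc.
by apply: IH.
Qed.

Lemma inv_run w :
  match foldl trans (Some None) w with
  | None => True
  | Some None => word_eval sX w = gone
  | Some (Some (k1, k2, ph, qB, qA)) =>
      exists p u v, (p = gone \/ PC p) /\
        word_eval sX w = gmul p (bval (k1, k2, u, v)) /\
        qB = foldl (@dtrans _ DB) (dstart DB) u /\
        qA = foldl (@dtrans _ DA) (dstart DA) v /\ (ph = false -> v = [::])
  end.
Proof.
elim/last_ind: w => [|w x IH] //.
rewrite foldl_rcons word_eval_rcons.
case: (foldl trans (Some None) w) IH => [[[[[[k1 k2] ph] qB] qA]|]|] //=.
- move=> [p [u [v [hp [ew [eB [eA ev]]]]]]].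
  case: x => [[k1' k2']|[xa|xb]] /=.
  + case ok: (okst k1 k2 qB qA) => //.
    have vb : bvalid (k1, k2, u, v) by move: ok; rewrite /bvalid /dfa_accepts /= -eB -eA.
    exists (@gmul (prodZ G) p (bval (k1, k2, u, v))), [::], [::]; split.
      right; case: hp => [->|hp].
        rewrite gmul1g; exact: bval_Pc.
      apply: (Pc_mul FP LA LB rho_hom rhoA rhoB) => //; exact: bval_Pc.
    split; last by [].
    rewrite ew /bval /= (hom1 (iA_hom FP)) (hom1 (iB_hom FP)) gmul1g.
    by rewrite /pz_mul /= !gmulg1 /=; congr pair; lia.
  + exists p, u, (rcons v xa); split => //; split.
      rewrite ew -pz_mulA; congr pz_mul.
      by rewrite /bval /= /pz_mul /= word_eval_rcons (iA_hom FP) gmulA; congr pair; lia.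
    split => //; split; last by [].
    by rewrite foldl_rcons eA.
  + case: ph ev => // ev; have ev0 := ev erefl; subst v.
    exists p, (rcons u xb), [::]; split => //; split.
      rewrite ew -pz_mulA; congr pz_mul.
      rewrite /bval /= /pz_mul /= word_eval_rcons (iB_hom FP) (hom1 (iA_hom FP)) !gmulg1.
      by congr pair; lia.
    by rewrite foldl_rcons eB.
- move=> ew; case: x => [[k1 k2]|[xa|xb]] //=.
  exists (@gone (prodZ G)), [::], [::]; split; first by left.
  split => //; rewrite ew !pz_mul1 /bval /= (hom1 (iA_hom FP)) (hom1 (iB_hom FP)) gmul1g.
  by [].
Qed.

Lemma sound w : dfa_accepts Dfa w -> PC (word_eval sX w).
Proof.
rewrite /dfa_accepts /=.
have := inv_run w.
case: (foldl trans (Some None) w) => [[[[[[k1 k2] ph] qB] qA]|]|] //=.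
move=> [p [u [v [hp [ew [eB [eA _]]]]]]] ok.
have vb : bvalid (k1, k2, u, v) by move: ok; rewrite /bvalid /dfa_accepts /= -eB -eA.
rewrite ew; case: hp => [->|hp].
  by rewrite pz_mul1; apply: bval_Pc.
by apply: (Pc_mul FP LA LB rho_hom rhoA rhoB) => //; apply: bval_Pc.
Qed.


Lemma exA a : exists v, word_eval sA v = a /\ (ltA gone a -> dfa_accepts DA v).
Proof.
case: (excluded_middle_informative (ltA gone a)) => h.
- have [v [ac ev]] := (DAspec a).1 h; by exists v.
- have [v ev] := surjA a; by exists v.
Qed.
Lemma exB b : exists v, word_eval sB v = b /\ (ltB gone b -> dfa_accepts DB v).
Proof.
case: (excluded_middle_informative (ltB gone b)) => h.
- have [v [ac ev]] := (DBspec b).1 h; by exists v.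
- have [v ev] := surjB b; by exists v.
Qed.

Lemma phi_consA a w : PHI (inl a :: w) = (- Z.b2z (isneg ltA a) + PHI w)%Z.
Proof. rewrite /=; case: (isneg ltA a) => /=; lia. Qed.
Lemma phi_consBA b a w : PHI (inr b :: inl a :: w) =
  (- Z.b2z (isneg ltB b) + 1 - Z.b2z (isneg ltA a) + PHI w)%Z.
Proof.
have -> : PHI (inr b :: inl a :: w) = (- nu ltA ltB (inr b) + neZ (inl a :: w) + (- nu ltA ltB (inl a) + 0 + PHI w))%Z by [].
have -> : neZ (inl a :: w) = 1%Z by [].
have -> : nu ltA ltB (inr b) = Z.b2z (isneg ltB b) by [].
have -> : nu ltA ltB (inl a) = Z.b2z (isneg ltA a) by [].
lia.
Qed.
Lemma phi_B b : PHI [:: inr b] = (- Z.b2z (isneg ltB b))%Z.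
Proof. rewrite /=; case: (isneg ltB b) => /=; lia. Qed.

Lemma ek_A n : ek (false, ~~ n) = Z.b2z n. Proof. by case: n. Qed.
Lemma ek_B n : ek (~~ n, false) = Z.b2z n. Proof. by case: n. Qed.
Lemma ek_BA n m : ek (~~ n, ~~ m) = (Z.b2z n + Z.b2z m - 1)%Z.
Proof. by case: n; case: m. Qed.
Lemma ek_t : ek (false, false) = 1%Z. Proof. by []. Qed.
Lemma ek_T : ek (true, true) = (-1)%Z. Proof. by []. Qed.
Lemma pz_mulg1 (x : prodZ G) : pz_mul x (pz_one G) = x.
Proof. exact: (gmulg1 (H := prodZ G) x). Qed.

Lemma decomp n w : size w <= n -> red w ->
  exists bs, all bvalid bs /\ bvals bs = (EV w, (- PHI w)%Z).
Proof.
elim: n w => [|n IH] w.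
  by case: w => // _ _; exists [::].
case: w => [|c w] hs r; first by exists [::].
case: c hs r => [a|b] hs r.
- case: r => [na [_ rw]].
  have [bs [vb eb]] := IH w hs rw.
  have [v [ev hv]] := exA a.
  exists ((false, ~~ isneg ltA a, [::], v) :: bs); split.
    apply/andP; split => //; apply/andP; split => //.
    apply/implyP => nn; apply: hv; exact: (pos_of_nonneg LA na nn).
  change (pz_mul (bval (false, ~~ isneg ltA a, [::], v)) (bvals bs) =
     (EV (inl a :: w), (- PHI (inl a :: w))%Z)).
  rewrite eb phi_consA /bval /pz_mul /= ev (hom1 (iB_hom FP)) gmul1g.
  by congr pair; rewrite ek_A; lia.
- case: r => [nb [side rw]].
  case: w hs side rw => [|[a|b'] w] hs side rw //.
  + have [u [eu hu]] := exB b.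
    exists [:: (~~ isneg ltB b, false, u, [::])]; split.
      apply/andP; split => //; apply/andP; split => //.
      apply/implyP => nn; apply: hu; exact: (pos_of_nonneg LB nb nn).
    change (pz_mul (bval (~~ isneg ltB b, false, u, [::])) (pz_one G) =
      (EV [:: inr b], (- PHI [:: inr b])%Z)).
    rewrite pz_mulg1 phi_B /bval /= eu (hom1 (iA_hom FP)) !gmulg1.
    by congr pair; rewrite ek_B; lia.
  + case: rw => [na [_ rw]].
    have [bs [vb eb]] := IH w (leq_trans (leqnSn _) hs) rw.
    have [u [eu hu]] := exB b.
    have [v [ev hv]] := exA a.
    exists ((~~ isneg ltB b, ~~ isneg ltA a, u, v) :: bs); split.
      apply/andP; split => //; apply/andP; split; apply/implyP => nn.
        by apply: hu; exact: (pos_of_nonneg LB nb nn).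
      by apply: hv; exact: (pos_of_nonneg LA na nn).
    change (pz_mul (bval (~~ isneg ltB b, ~~ isneg ltA a, u, v)) (bvals bs) =
      (EV [:: inr b, inl a & w], (- PHI [:: inr b, inl a & w])%Z)).
    rewrite eb phi_consBA /bval /pz_mul /= eu ev gmulA.
    by congr pair; rewrite ek_BA; lia.
Qed.

Definition tblk : blk := (false, false, [::], [::]).

Lemma bvals_t j : bvals (nseq j tblk) = (gone, Z.of_nat j).
Proof.
elim: j => [|j IH] //.
change (pz_mul (bval tblk) (bvals (nseq j tblk)) = (gone, Z.of_nat j.+1)).
rewrite IH.
have -> : bval tblk = (gmul (iB gone) (iA gone), 1%Z) by []. rewrite /pz_mul; cbn [fst snd]. rewrite (hom1 (iA_hom FP)) (hom1 (iB_hom FP)) !gmul1g. by congr pair; lia.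
Qed.

Lemma complete x : PC x -> exists w, dfa_accepts Dfa w /\ word_eval sX w = x.
Proof.
case: x => g m [ne p].
have [bs [vb eb]] := decomp (leqnn _) (red_nf rho g).
set j := Z.to_nat (m + PHI (NF g)).
have ev : bvals (bs ++ nseq j tblk) = (g, m).
  rewrite bvals_cat eb bvals_t /= /pz_mul /= gmulg1 (evnf FP rho_hom rhoA rhoB).
  congr pair; rewrite /j; move: p; rewrite /fz /=; lia.
exists (flatten (map bword (bs ++ nseq j tblk))); split.
  apply: accept_blocks => //.
    by move=> e; apply: ne; rewrite -ev e.
  by rewrite all_cat vb /=; elim: j {ev} => [|j IH].
by rewrite we_flatten.
Qed.

Lemma we_T k : word_eval sX (nseq k (inl (true, true))) = (gone, (- Z.of_nat k)%Z).
Proof.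
elim: k => [|k IH] //.
change (pz_mul (sX (inl (true, true))) (word_eval sX (nseq k (inl (true, true)))) =
  (gone, (- Z.of_nat k.+1)%Z)).
have -> : sX (inl (true, true)) = (gone, (-1)%Z) by [].
rewrite IH /pz_mul; cbn [fst snd]; rewrite gmul1g; congr pair; lia.
Qed.

Lemma surjX x : exists w, word_eval sX w = x.
Proof.
case: x => g m.
set K := Z.to_nat (Z.abs (m + PHI (NF g)) + 1).
have hK : (Z.of_nat K = Z.abs (m + PHI (NF g)) + 1)%Z by rewrite /K; lia.
have py : PC (g, (m + Z.of_nat K)%Z).
  split; last by rewrite /fz /=; lia.
  move=> e; have e1 := f_equal fst e; have e2 := f_equal snd e; simpl in e1, e2.
  move: hK e2; rewrite e1 (nf_one rho_hom rhoA rhoB) /=; lia.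
have [w [_ ew]] := complete py.
exists (w ++ nseq K (inl (true, true))).
rewrite word_eval_cat ew we_T /= /pz_mul /= gmulg1; congr pair; lia.
Qed.

Lemma reg : regular_order (ltG ltA ltB rho).
Proof.
exists X, sX; split; first exact: surjX.
exists Dfa => x; rewrite pos_ltG; split; first exact: complete.
by case=> w [ac <-]; apply: sound.
Qed.

End Reg.


Unset Implicit Arguments.

Theorem corollary5p15 (A B G : Group) (iA : A -> G) (iB : B -> G) :
  is_free_product iA iB ->
  admits_regular_left_order A ->
  admits_regular_left_order B ->
  admits_regular_left_order (prodZ G).
Proof.
move=> FP [ltA [LA [XA [sA [surjA [DA DAspec]]]]]] [ltB [LB [XB [sB [surjB [DB DBspec]]]]]].
have FP' := FP.
case: FP' => hiA [hiB U].
have [[rho [rho_hom [rhoA rhoB]]] _] := U (SymG (Om A B)) (@rA A B) (@rB A B) (@rA_hom A B) (@rB_hom A B).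
exists (ltG ltA ltB rho); split.
  exact: (ltG_lo FP LA LB rho_hom rhoA rhoB).
exact: (reg FP LA LB rho_hom rhoA rhoB surjA DAspec surjB DBspec).
Qed.
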